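(* Assume the setting in the context (in particular Assumption (A)). Let $\rho>0$, let $v_0\in V_f(\rho)$ and let $n$ be an integer with $n>\bar n_\rho$. Consider the fixed-rate restart recursion $v_{j+1}=\mathcal{A}(v_j,n)$, $j\geq 0$. Let $\epsilon>0$. Then: (i) the inequality $f(v_{M-1})-f(v_M)\leq \epsilon$ holds for every integer $M\geq \bar M$, where $$\bar M := 1+\frac{1}{2(\ln n-\ln \bar n_\rho)}\ln\left(1+\frac{f(v_0)-f^*}{\epsilon}\right);$$ (ii) if $n=\lceil e\,\bar n_\rho\rceil$, then the total number of iterations of $\mathcal{A}$ required to attain $f(v_{j-1})-f(v_j)\leq\epsilon$ (i.e. $n$ times the smallest $j\geq 1$ for which this holds) is upper bounded by $$\bar N_F^* := \lceil e\,\bar n_\rho\rceil\left\lceil 1+\frac12\ln\left(1+\frac{f(v_0)-f^*}{\epsilon}\right)\right\rceil.$$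
   Context: Let $f:\mathbb{R}^n\to(-\infty,\infty]$ be a proper closed convex function such that the problem $f^*=\min_{x\in\mathbb{R}^n}f(x)$ is solvable. Let $\Omega_f=\{x: f(x)=f^*\}$ be the optimal set, fix a norm $\|\cdot\|$ on $\mathbb{R}^n$ with dual norm $\|y\|_*=\sup\{y^Tz:\|z\|\leq 1\}$, and for $x\in\mathbb{R}^n$ let $\bar x=\arg\min_{z\in\Omega_f}\|x-z\|$. For $\rho\geq0$ let $V_f(\rho)=\{x\in\mathbb{R}^n: f(x)-f^*\leq\rho\}$. Let $\mathcal{A}$ be an iterative algorithm: for an initial point $x_0\in\mathrm{dom} f$ and integer $k\geq1$, $\mathcal{A}(x_0,k)\in\mathbb{R}^n$ denotes its $k$-th iterate started from $x_0$. Assumption (A): (i) for every $\rho>0$ there is $\mu_\rho>0$ with $f(x_0)-f^*\geq\frac{\mu_\rho}{2}\|x_0-\bar x_0\|^2$ for all $x_0\in V_f(\rho)$; (ii) there exist constants $a_f>0$, $L_f>0$ and a map $g:\mathbb{R}^n\to\mathbb{R}^n$ with $g(x)=0\iff x\in\Omega_f$ such that for every $x_0\in\mathrm{dom} f$: $f(\mathcal{A}(x_0,1))\leq f(x_0)-\frac{1}{2L_f}\|g(x_0)\|_*^2$ and $f(\mathcal{A}(x_0,k))-f^*\leq\frac{a_f}{(k+1)^2}\|x_0-\bar x_0\|^2$ for all $k\geq1$; (iii) $\bar n_\rho:=\max\{\frac12,\sqrt{2a_f/\mu_\rho}\}$. Here $e$ is Euler's number and $\lceil\cdot\rceil$ the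 ceiling. *)

(* Defs.v *)
From HB Require Import structures.
From mathcomp Require Import all_boot all_order all_algebra.
From mathcomp Require Import all_classical all_reals all_analysis.
Set Implicit Arguments. Unset Strict Implicit. Unset Printing Implicit Defensive.
Import Order.TTheory GRing.Theory Num.Theory.
Import numFieldTopology.Exports numFieldNormedType.Exports.
Local Open Scope classical_set_scope.
Local Open Scope ring_scope.

Section Defs.
Variables (R : realType) (d : nat).
Notation vec := 'rV[R]_d.

Definition dotv (y z : vec) : R := \sum_(i < d) y ord0 i * z ord0 i.

Definition is_norm (nrm : vec -> R) : Prop :=
  [/\ forall x, nrm x = 0 -> x = 0,
      forall (a : R) x, nrm (a *: x) = `|a| * nrm x &
      forall x y, nrm (x + y) <= nrm x + nrm y].

Definition dualnorm (nrm : vec -> R) (y : vec) : R :=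
  sup [set dotv y z | z in [set z | nrm z <= 1]].

Definition proper_fun (f : vec -> \bar R) : Prop :=
  (forall x, (-oo < f x)%E) /\ exists x, (f x < +oo)%E.

Definition closed_fun (f : vec -> \bar R) : Prop :=
  closed [set p : vec * R | (f p.1 <= p.2%:E)%E].

Definition convex_fun (f : vec -> \bar R) : Prop :=
  forall (x y : vec) (t : R), 0 < t < 1 ->
    (f (t *: x + (1 - t) *: y)%R <= t%:E * f x + (1 - t)%:E * f y)%E.

Definition is_min_value (f : vec -> \bar R) (fstar : R) : Prop :=
  (exists x, f x = fstar%:E) /\ forall y, (fstar%:E <= f y)%E.

Definition is_nearest_sel (f : vec -> \bar R) (fstar : R) (nrm : vec -> R)
  (bar : vec -> vec) : Prop :=
  forall x, f (bar x) = fstar%:E /\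
    forall z, f z = fstar%:E -> nrm (x - bar x) <= nrm (x - z).

Definition assumptionA (f : vec -> \bar R) (fstar : R) (nrm : vec -> R)
  (bar : vec -> vec) (Alg : vec -> nat -> vec) (mu : R -> R)
  (af Lf : R) (g : vec -> vec) : Prop :=
  [/\ forall rho, 0 < rho -> 0 < mu rho /\
        forall x0, (f x0 - fstar%:E <= rho%:E)%E ->
          ((mu rho / 2 * nrm (x0 - bar x0) ^+ 2)%:E <= f x0 - fstar%:E)%E,
      0 < af, 0 < Lf,
      forall x, g x = 0 <-> f x = fstar%:E &
      forall x0, (f x0 < +oo)%E ->
        (f (Alg x0 1%N) <= f x0 - (dualnorm nrm (g x0) ^+ 2 / (2 * Lf))%:E)%E /\
        forall k : nat, (1 <= k)%N ->
          (f (Alg x0 k) - fstar%:E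
             <= (af / (k%:R + 1) ^+ 2 * nrm (x0 - bar x0) ^+ 2)%:E)%E].

Definition nbar (af : R) (mu : R -> R) (rho : R) : R :=
  Num.max (1 / 2) (Num.sqrt (2 * af / mu rho)).

Definition restart (Alg : vec -> nat -> vec) (n : nat) (v0 : vec) (j : nat) : vec :=
  iter j (fun x => Alg x n) v0.

End Defs.

(* Main.v *)
Require Import Defs.
From HB Require Import structures.
From mathcomp Require Import all_boot all_order all_algebra.
From mathcomp Require Import all_classical all_reals all_analysis.
From mathcomp Require Import ring lra.
Import Order.TTheory GRing.Theory Num.Theory.
Import numFieldTopology.Exports numFieldNormedType.Exports.
Local Open Scope classical_set_scope.
Local Open Scope ring_scope.

Theorem mainTheorem1 (R : realType) (d : nat) (f : 'rV[R]_d -> \bar R) (fstar : R)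
  (nrm : 'rV[R]_d -> R) (bar : 'rV[R]_d -> 'rV[R]_d)
  (Alg : 'rV[R]_d -> nat -> 'rV[R]_d) (mu : R -> R) (af Lf : R)
  (g : 'rV[R]_d -> 'rV[R]_d) :
  proper_fun f -> closed_fun f -> convex_fun f ->
  is_min_value f fstar ->
  is_norm nrm ->
  is_nearest_sel f fstar nrm bar ->
  assumptionA f fstar nrm bar Alg mu af Lf g ->
  forall (rho : R) (v0 : 'rV[R]_d) (n : nat) (eps : R),
  0 < rho -> (f v0 - fstar%:E <= rho%:E)%E ->
  nbar af mu rho < n%:R ->
  0 < eps ->
  let v := restart Alg n v0 in
  let gap0 := fine (f v0 - fstar%:E) in
  (* (i) *)
  (forall M : nat,
      1 + (2 * (ln n%:R - ln (nbar af mu rho)))^-1 * ln (1 + gap0 / eps) <= M%:R ->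
      (f (v M.-1) - f (v M) <= eps%:E)%E)
  /\
  (* (ii) *)
  (n%:R = ((Num.ceil (expR 1 * nbar af mu rho))%:~R : R) ->
   forall j : nat, (1 <= j)%N ->
     (f (v j.-1) - f (v j) <= eps%:E)%E ->
     (forall i : nat, (1 <= i)%N -> (i < j)%N -> ~ (f (v i.-1) - f (v i) <= eps%:E)%E) ->
     (n * j)%N%:R <= ((Num.ceil (expR 1 * nbar af mu rho))%:~R : R)
                   * ((Num.ceil (1 + (2:R)^-1 * ln (1 + gap0 / eps)))%:~R : R)).
Proof.
move=> _ _ _ [_ Hmin] _ _ [Hmu Haf HLf Hg HAlg] rho v0 n eps Hrho Hv0 Hn Heps v gap0.
have [mup Hmu2] := Hmu rho Hrho.
set nb := nbar af mu rho in Hn *.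
have nb_half : 1/2 <= nb by rewrite /nb /nbar le_max lexx.
have nb_pos : 0 < nb by apply: lt_le_trans nb_half; lra.
have npos : 0 < (n%:R : R) by apply: lt_trans Hn.
have n1 : (1 <= n)%N by rewrite -(ltr_nat R) /=.
have nb2 : 2 * af / mu rho <= nb ^+ 2.
  have a0 : 0 <= 2 * af / mu rho by apply: divr_ge0; lra.
  have := sqr_sqrtr a0.
  have : Num.sqrt (2 * af / mu rho) <= nb by rewrite /nb /nbar le_max lexx orbT.
  have := sqrtr_ge0 (2 * af / mu rho).
  move: (Num.sqrt _) => s; nra.
have fin : forall x, (f x - fstar%:E <= rho%:E)%E ->
    exists r, f x = r%:E /\ fstar <= r.
  move=> x; have := Hmin x; case: (f x) => [r| |] //= H1 H2.
  by exists r; split => //; rewrite -lee_fin.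
set q := (nb / n%:R) ^+ 2.
have q0 : 0 <= q by rewrite /q sqr_ge0.
have q1 : q <= 1.
  rewrite /q expr_le1 ?divr_ge0 //; try lra.
  by rewrite ler_pdivrMr // mul1r ltW.
have step : forall x r, f x = r%:E -> r - fstar <= rho ->
    exists r', f (Alg x n) = r'%:E /\ fstar <= r' /\ r' - fstar <= q * (r - fstar).
  move=> x r Hx Hr.
  have fx : (f x < +oo)%E by rewrite Hx ltry.
  have [_ H2] := HAlg x fx.
  have Hk := H2 n n1.
  have fx2 : (f x - fstar%:E <= rho%:E)%E by rewrite Hx -EFinB lee_fin.
  have Hm := Hmu2 x fx2.
  rewrite Hx -EFinB lee_fin in Hm.
  have := Hmin (Alg x n); move: Hk; case: (f (Alg x n)) => [r'| |] //= Hk Hl.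
  rewrite -EFinB lee_fin in Hk; rewrite lee_fin in Hl.
  exists r'; split => //; split => //.
  move: (nrm (x - bar x)) Hk Hm => N Hk Hm.
  set A := 2 * af / mu rho in nb2.
  have A0 : 0 <= A by rewrite /A; apply: divr_ge0; lra.
  have E : af / (n%:R + 1) ^+ 2 * N ^+ 2 = A * (mu rho / 2 * N ^+ 2) * ((n%:R + 1) ^+ 2)^-1.
    rewrite /A; field; apply/andP; split; apply/eqP; lra.
  rewrite E in Hk.
  have t0 : 0 <= mu rho / 2 * N ^+ 2 by apply: mulr_ge0; [lra| exact: sqr_ge0].
  have B : A * (mu rho / 2 * N ^+ 2) <= nb ^+ 2 * (r - fstar).
    move: (mu rho / 2 * N ^+ 2) t0 Hm => t t0 Hm; nra.
  have C : ((n%:R + 1) ^+ 2)^-1 <= ((n%:R : R) ^+ 2)^-1.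
    rewrite lef_pV2 ?posrE; try nra.
  have D : 0 <= nb ^+ 2 * (r - fstar) by apply: mulr_ge0; [exact: sqr_ge0| lra].
  have : q * (r - fstar) = nb ^+ 2 * (r - fstar) * ((n%:R : R) ^+ 2)^-1.
    rewrite /q; field; apply/eqP; lra.
  move=> ->.
  apply: (le_trans Hk).
  apply: le_trans (ler_wpM2r _ B) _; first by rewrite invr_ge0; nra.
  by apply: ler_wpM2l.
have [r0 [Hf0 H0]] := fin v0 Hv0.
have gapE : gap0 = r0 - fstar by rewrite /gap0 Hf0 -EFinB.
have g0 : 0 <= gap0 by rewrite gapE; lra.
have grho : gap0 <= rho by rewrite gapE -lee_fin EFinB -Hf0.
have seqb : forall j, exists r, f (v j) = r%:E /\ fstar <= r /\ r - fstar <= q ^+ j * gap0.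
  elim=> [|j [r [Hr [Hr1 Hr2]]]].
    by exists r0; split => //; split => //; rewrite expr0 mul1r gapE.
  have qj : q ^+ j <= 1 by exact: exprn_ile1.
  have Hr3 : r - fstar <= rho by nra.
  have [r' [Hr' [Hr'1 Hr'2]]] := step _ _ Hr Hr3.
  exists r'; split; first exact: Hr'.
  split => //.
  rewrite exprS -mulrA; apply: (le_trans Hr'2); by apply: ler_wpM2l.
set D := ln (n%:R : R) - ln nb.
set L := ln (1 + gap0 / eps).
have L0 : 0 <= L.
  rewrite /L ln_ge0 // lerDl divr_ge0 //; lra.
have D0 : 0 < D.
  rewrite /D subr_gt0 ltr_ln ?posrE //.
have eD : expR D = n%:R / nb by rewrite /D expRB !lnK ?posrE.
have key : forall k : nat, (2 * D)^-1 * L <= k%:R -> q ^+ k * gap0 <= eps.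
  move=> k Hk.
  have P1 : q ^+ k * expR (k%:R * (2 * D)) = 1.
    rewrite expRM_natl expRM_natl eD -exprMn.
    rewrite (_ : q * (n%:R / nb) ^+ 2 = 1) ?expr1n //.
    rewrite /q -exprMn (_ : nb / n%:R * (n%:R / nb) = 1) ?expr1n //.
    field; apply/andP; split; apply/eqP; lra.
  have HL : L <= k%:R * (2 * D).
    by move: Hk; rewrite mulrC ler_pdivrMr ?mulr_gt0.
  have eL : expR L = 1 + gap0 / eps.
    rewrite /L lnK // posrE; have := divr_ge0 g0 (ltW Heps); lra.
  have H1 : gap0 <= eps * expR (k%:R * (2 * D)).
    apply: le_trans (_ : eps * expR L <= _).
      rewrite eL mulrDr mulr1 mulrCA divff ?mulr1; first lra.
      by apply/eqP; lra.
    by apply: ler_wpM2l; [exact: ltW | rewrite ler_expR].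
  have qk0 : 0 <= q ^+ k by exact: exprn_ge0.
  rewrite mulrC; apply: le_trans (ler_wpM2r qk0 H1) _.
  by rewrite mulrAC -mulrA P1 mulr1.
have partI : forall M : nat, 1 + (2 * D)^-1 * L <= M%:R ->
    (f (v M.-1) - f (v M) <= eps%:E)%E.
  case=> [|k] HM /=.
    by rewrite Hf0 -EFinB subrr lee_fin ltW.
  have [r [Hr [Hr1 Hr2]]] := seqb k.
  have [r' [Hr' [Hr'1 _]]] := seqb k.+1.
  rewrite Hr Hr' -EFinB lee_fin.
  have : (2 * D)^-1 * L <= k%:R.
    by rewrite -(natr1 k) in HM; lra.
  move/key. lra.
split; first exact: partI.
move=> Hnc j j1 Hj Hmin'.
set c := Num.ceil (1 + 2^-1 * L).
have c1 : 1 + 2^-1 * L <= c%:~R by exact: ceil_ge.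
have [m cm] : exists m : nat, c = Posz m.
  case Ec: c c1 => [m|m] c1; first by exists m.
  exfalso; move: c1; rewrite NegzE mulrNz; move=> c1.
  have : (0 : R) <= (m.+1)%:~R by rewrite ler0z.
  lra.
rewrite cm /= in c1 *.
have D1 : 1 <= D.
  have ne : expR 1 * nb <= n%:R by rewrite Hnc; exact: ceil_ge.
  have : ln (expR 1 * nb) <= ln (n%:R : R).
    by rewrite ler_ln ?posrE // mulr_gt0 // expR_gt0.
  rewrite lnM ?posrE ?expR_gt0 // expRK /D; lra.
have jm : (j <= m)%N.
  case: (leqP j m) => // Hmj; exfalso.
  have m1 : (1 <= m)%N.
    by rewrite -(ler1n R); apply: le_trans c1; rewrite lerDl mulr_ge0 // invr_ge0; lra.
  apply: (Hmin' m m1 Hmj); apply: partI.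
  apply: le_trans c1; rewrite lerD2l; apply: ler_wpM2r => //.
  rewrite lef_pV2 ?posrE; lra.
rewrite natrM -Hnc; apply: ler_wpM2l; first exact: ltW.
by rewrite ler_nat.
Qed.
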